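(* Let $h$ be a fixed-point-free isometry of order $3$ of the $E_8$ root lattice. In $E_8\perp E_8$ let $M=\{(x,x):x\in E_8\}$ and $M'=\{(hx,x):x\in E_8\}$. Then $M+M'$ contains no vectors of norm $2$ (it is rootless). *)

(* Defs.v *)
From mathcomp Require Import all_boot all_order all_algebra.
Set Implicit Arguments. Unset Strict Implicit. Unset Printing Implicit Defensive.
Import Order.TTheory GRing.Theory Num.Theory.
Local Open Scope ring_scope.

Definition dot8 (x y : 'rV[rat]_8) : rat := \sum_(i < 8) x 0 i * y 0 i.
Definition norm8 (x : 'rV[rat]_8) : rat := dot8 x x.

(* The E8 root lattice (standard coordinates): all coordinates integers or
   all coordinates in Z + 1/2, with even coordinate sum. Roots have norm 2. *)
Definition E8 (x : 'rV[rat]_8) : Prop :=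
  ((forall i, x 0 i \is a Num.int) \/ (forall i, x 0 i - 2^-1 \is a Num.int))
  /\ (2^-1 * \sum_(i < 8) x 0 i) \is a Num.int.

(* An isometry of E8, acting on row vectors by x |-> x *m H:
   H is orthogonal (preserves the inner product) and maps E8 into E8
   (hence onto, as H is invertible with H^-1 = H^T). *)
Definition E8_isometry (H : 'M[rat]_8) : Prop :=
  H *m H^T = 1%:M /\ (forall x, E8 x -> E8 (x *m H)).

Definition order3 (H : 'M[rat]_8) : Prop := H ^+ 3 = 1 /\ H != 1.

Definition fixed_point_free (H : 'M[rat]_8) : Prop :=
  forall x, E8 x -> x *m H = x -> x = 0.

Definition norm88 (v : 'rV[rat]_8 * 'rV[rat]_8) : rat := norm8 v.1 + norm8 v.2.

Definition Mdiag (v : 'rV[rat]_8 * 'rV[rat]_8) : Prop :=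
  exists x, E8 x /\ v = (x, x).
Definition Mtwist (H : 'M[rat]_8) (v : 'rV[rat]_8 * 'rV[rat]_8) : Prop :=
  exists x, E8 x /\ v = (x *m H, x).

Definition lat_sum (A B : 'rV[rat]_8 * 'rV[rat]_8 -> Prop) v : Prop :=
  exists a b, A a /\ B b /\ v = (a.1 + b.1, a.2 + b.2).

Definition rootless (L : 'rV[rat]_8 * 'rV[rat]_8 -> Prop) : Prop :=
  forall v, L v -> norm88 v <> 2.

(* Main.v *)
Require Import Defs.
From mathcomp Require Import all_boot all_order all_algebra.
From mathcomp Require Import zify ring lra.
Import Order.TTheory GRing.Theory Num.Theory.
Local Open Scope ring_scope.

Lemma dotC x y : dot8 x y = dot8 y x.
Proof. by apply: eq_bigr => i _; rewrite mulrC. Qed.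

Lemma dotDl x y z : dot8 (x + y) z = dot8 x z + dot8 y z.
Proof. by rewrite /dot8 -big_split; apply: eq_bigr => i _; rewrite mxE mulrDl. Qed.

Lemma dotNl x z : dot8 (- x) z = - dot8 x z.
Proof. by rewrite /dot8 -sumrN; apply: eq_bigr => i _; rewrite mxE mulNr. Qed.

Lemma dotDr x y z : dot8 z (x + y) = dot8 z x + dot8 z y.
Proof. by rewrite dotC dotDl !(dotC z). Qed.

Lemma dotNr x z : dot8 z (- x) = - dot8 z x.
Proof. by rewrite dotC dotNl dotC. Qed.

Lemma dotE x y : dot8 x y = (x *m y^T) 0 0.
Proof. by rewrite mxE; apply: eq_bigr => i _; rewrite mxE. Qed.

Lemma dotH (H : 'M[rat]_8) x y : H *m H^T = 1%:M -> dot8 (x *m H) (y *m H) = dot8 x y.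
Proof. by move=> HH; rewrite !dotE trmx_mul mulmxA -(mulmxA x) HH mulmx1. Qed.

Lemma norm_ge0 x : 0 <= norm8 x.
Proof. by apply: sumr_ge0 => i _; rewrite -expr2 sqr_ge0. Qed.

Lemma norm_eq0 x : norm8 x = 0 -> x = 0.
Proof.
move=> h; apply/rowP => i; rewrite mxE.
have h1 : \sum_(j < 8) x 0 j ^+ 2 = 0.
  by rewrite -[RHS]h /norm8 /dot8; apply: eq_bigr => j _; rewrite expr2.
have := @psumr_eq0P _ _ xpredT (fun j => x 0 j ^+ 2) (fun j _ => sqr_ge0 (x 0 j)) h1 i isT.
by move/eqP; rewrite sqrf_eq0 => /eqP.
Qed.

Lemma E8D x y : E8 x -> E8 y -> E8 (x + y).
Proof.
move=> [hx sx] [hy sy]; split; last first.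
  have -> : \sum_(i < 8) (x + y) 0 i = \sum_(i < 8) x 0 i + \sum_(i < 8) y 0 i.
    by rewrite -big_split; apply: eq_bigr => i _; rewrite mxE.
  by rewrite mulrDr rpredD.
case: hx => hx; case: hy => hy.
- by left => i; rewrite mxE rpredD.
- by right => i; rewrite mxE -addrA rpredD.
- by right => i; rewrite mxE addrAC rpredD.
- left => i; rewrite mxE.
  have -> : x 0 i + y 0 i = (x 0 i - 2^-1) + (y 0 i - 2^-1) + 1.
    by field.
  by rewrite rpredD ?rpred1 // rpredD.
Qed.

Lemma half_int (r : rat) : r \is a Num.int -> 2^-1 * (r * r + r) \is a Num.int.
Proof.
move=> /intrP [z ->].
have [k hk] : exists k : int, z * z + z = 2 * k.
  set m := (z %/ 2)%Z; set q := (z %% 2)%Z.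
  have ez : z = m * 2 + q by apply: divz_eq.
  have q0 : 0 <= q by apply: modz_ge0.
  have q2 : q < 2 by rewrite /q ltz_mod.
  rewrite ez; have [->|->] : q = 0 \/ q = 1 by lia.
  - by exists (2 * m * m + m); ring.
  - by exists (2 * m * m + 3 * m + 1); ring.
have -> : (z%:~R * z%:~R + z%:~R : rat) = (z * z + z)%:~R by rewrite rmorphD rmorphM.
rewrite hk rmorphM /= mulrA mulVf // ?mul1r ?rpred_int //.
Qed.

Lemma E8_norm x : E8 x -> 2^-1 * norm8 x \is a Num.int.
Proof.
move=> [[hx|hx] sx].
- have -> : 2^-1 * norm8 x =
     \sum_(i < 8) 2^-1 * ((x 0 i - 1) * (x 0 i - 1) + (x 0 i - 1)) + 2^-1 * \sum_(i < 8) x 0 i.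
    rewrite -mulr_sumr -mulrDr -big_split /=; congr (_ * _).
    by apply: eq_bigr => i _; ring.
  by rewrite rpredD // rpred_sum // => i _; rewrite half_int // rpredB.
- have -> : 2^-1 * norm8 x =
     \sum_(i < 8) (2^-1 * ((x 0 i - 2^-1) * (x 0 i - 2^-1) + (x 0 i - 2^-1)) + 2^-1 * 4^-1).
    rewrite /norm8 /dot8 mulr_sumr; apply: eq_bigr => i _.
    by field.
  rewrite big_split /= sumr_const card_ord.
  have -> : (2^-1 * 4^-1 : rat) *+ 8 = 1 by apply/eqP.
  by rewrite rpredD ?rpred1 // rpred_sum // => i _; rewrite half_int.
Qed.

Lemma E8_normE x : E8 x -> exists m : int, norm8 x = 2 * m%:~R /\ 0 <= m.
Proof.
move=> /E8_norm /intrP [m hm]; exists m.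
have e : norm8 x = 2 * m%:~R by rewrite -hm mulrA divff // mul1r.
split=> //; have := norm_ge0 x; rewrite e pmulr_rge0 // ler0z //.
Qed.

Theorem lemma2p6 (H : 'M[rat]_8) :
  E8_isometry H -> order3 H -> fixed_point_free H ->
  rootless (lat_sum Mdiag (Mtwist H)).
Proof.
move=> [HH E8H] [H3 _] ffp v [a [b [[x [Ex ->]] [[y [Ey ->]] ->]]]] /=.
rewrite /norm88 /=.
set u := x + y *m H; set s := x + y.
have Eu : E8 u by apply: E8D => //; apply: (E8H).
have Es : E8 s by apply: E8D.
have key : norm8 (y *m H - y) = 3 * norm8 y.
  set z := y + y *m H + y *m H *m H.
  have Ez : E8 z by apply: E8D; [apply: E8D => //; apply: (E8H) | apply: (E8H); apply: (E8H)].
  have zH : z *m H = z.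
    rewrite /z !mulmxDl -!mulmxA.
    have -> : H *m (H *m H) = 1%:M by rewrite !mulmxE -[RHS]/(1 : 'M_8) -H3 !exprS expr0 mulr1.
    by rewrite mulmx1 addrC addrA.
  have z0 := ffp z Ez zH.
  have d0 : dot8 z y = 0 by rewrite z0 /dot8 big1 // => i _; rewrite mxE mul0r.
  have h2 : dot8 (y *m H *m H) y = dot8 (y *m H) y.
    rewrite -(dotH _ (y *m H *m H) y HH) -!mulmxA.
    have -> : H *m (H *m H) = 1%:M by rewrite !mulmxE -[RHS]/(1 : 'M_8) -H3 !exprS expr0 mulr1.
    by rewrite mulmx1 dotC.
  move: d0; rewrite /z !dotDl h2 => d0.
  rewrite /norm8 dotDl dotNl !dotDr !dotNr dotH // (dotC y (y *m H)).
  rewrite /norm8 in d0 *; lra.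
have [n [hn n0]] := E8_normE y Ey.
have [p [hp p0]] := E8_normE u Eu.
have [q [hq q0]] := E8_normE s Es.
rewrite hp hq => h.
have pq : p + q = 1.
  apply/eqP; rewrite -(eqr_int rat); apply/eqP.
  by rewrite rmorphD /=; lra.
have w2 : norm8 (y *m H - y) = 2.
  have -> : y *m H - y = u - s by rewrite /u /s opprD addrACA subrr add0r.
  have [[P Q]|[P Q]] : (p = 0 /\ q = 1) \/ (p = 1 /\ q = 0) by lia.
  - move: hp; rewrite P mulr0 => /norm_eq0 ->.
    by rewrite sub0r /norm8 dotNl dotNr opprK -/(norm8 s) hq Q mulr1.
  - move: hq; rewrite Q mulr0 => /norm_eq0 ->.
    by rewrite subr0 hp P mulr1.
move: key; rewrite w2 hn => k.
have : 3 * n = 1.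
  apply/eqP; rewrite -(eqr_int rat); apply/eqP.
  rewrite rmorphM /=; lra.
move=> e; clear -e; lia.
Qed.
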